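(* Let $\mathcal{A}$ be an irreducible $n\times n$ znz-pattern with digraph $D(\mathcal{A})$, and let $\mathbb{F}=\mathbb{Z}_2$. (a) If $D(\mathcal{A})$ has an odd number of loops, then $\mathcal{A}$ is not potentially nilpotent over $\mathbb{Z}_2$. (b) If $D(\mathcal{A})$ has exactly two loops and exactly two $2$-cycles, then $\mathcal{A}$ is not potentially nilpotent over $\mathbb{Z}_2$.
   Context: A znz-pattern is a square matrix with entries in $\{*,0\}$; a realization over $\mathbb{F}$ is a matrix over $\mathbb{F}$ with nonzero entries exactly at the $*$ positions; potentially nilpotent over $\mathbb{F}$ means some realization is nilpotent. $D(\mathcal{A})$ has vertex set $\{1,\ldots,n\}$ and an arc $(i,j)$ when $\mathcal{A}_{i,j}=*$; loops are arcs $(i,i)$, and a $2$-cycle is a pair of distinct vertices $i,j$ with both arcs $(i,j)$ and $(j,i)$. Irreducible means $D(\mathcal{A})$ is strongly connected. *)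

(* Defs.v *)
From HB Require Import structures.
From mathcomp Require Import all_boot all_order all_algebra.
Set Implicit Arguments. Unset Strict Implicit. Unset Printing Implicit Defensive.
Import GRing.Theory.
Local Open Scope ring_scope.

(* A znz-pattern of order n: entry true = '*', false = '0'. *)
Definition znz_pattern (n : nat) := 'M[bool]_n.

Definition realization (F : fieldType) (n : nat) (P : znz_pattern n) (A : 'M[F]_n) : Prop :=
  forall i j, (A i j != 0) = P i j.

Definition nilpotent_mx (F : fieldType) (n : nat) (A : 'M[F]_n) : Prop :=
  exists k : nat, A ^+ k = 0.

Definition potentially_nilpotent (F : fieldType) (n : nat) (P : znz_pattern n) : Prop :=
  exists A : 'M[F]_n, realization P A /\ nilpotent_mx A.

Definition arc (n : nat) (P : znz_pattern n) : rel 'I_n := fun i j => P i j.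

Definition irreducible_pattern (n : nat) (P : znz_pattern n) : Prop :=
  forall i j : 'I_n, connect (arc P) i j.

Definition num_loops (n : nat) (P : znz_pattern n) : nat :=
  #|[set i : 'I_n | P i i]|.

(* Number of 2-cycles: unordered pairs {i,j}, i <> j, with arcs (i,j),(j,i);
   counted via ordered pairs with i < j. *)
Definition num_2cycles (n : nat) (P : znz_pattern n) : nat :=
  #|[set ij : 'I_n * 'I_n | (ij.1 < ij.2)%N && P ij.1 ij.2 && P ij.2 ij.1]|.

(* Main.v *)
Require Import Defs.
From mathcomp Require Import all_boot all_order all_algebra.
Import GRing.Theory.
Local Open Scope ring_scope.
Set Implicit Arguments. Unset Strict Implicit. Unset Printing Implicit Defensive.

Lemma split_sum (T : finType) (f : T -> nat) (finj : injective f) (R : nmodType)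
  (F : T -> T -> R) :
  \sum_x \sum_y F x y = \sum_x F x x + \sum_x \sum_(y | (f x < f y)%N) (F x y + F y x).
Proof.
have E x : \sum_y F x y = F x x + (\sum_(y | (f x < f y)%N) F x y + \sum_(y | (f y < f x)%N) F x y).
  rewrite (bigD1 x) //=; congr (_ + _); rewrite (bigID (fun y => (f x < f y)%N)) /=.
  congr (_ + _); first by apply: eq_bigl => y; case: eqP => // ->; rewrite ltnn.
  apply: eq_bigl => y; rewrite -leqNgt.
  rewrite ltn_neqAle; case: (y =P x) => [->|nyx]; first by rewrite eqxx.
  have -> : (f y != f x) by apply/eqP => /finj.
  by [].
rewrite (eq_bigr _ (fun x _ => E x)) big_split /=; congr (_ + _).
rewrite big_split /=.
under [in RHS]eq_bigr => x _ do rewrite big_split /=.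
rewrite big_split /=; congr (_ + _).
rewrite (exchange_big_dep xpredT) //=.
Qed.
Lemma F2add (x : 'F_2) : x + x = 0.
Proof. by case: x => [[|[|//]] ?]; apply/val_inj. Qed.

Lemma sym_sum (R : comPzRingType) (c2 : forall x : R, x + x = 0) (T : finType) (P : pred T) (h : T -> T -> R) :
  (forall x y, h x y = h y x) ->
  \sum_(x | P x) \sum_(y | P y) h x y = \sum_(x | P x) h x x.
Proof.
move=> hs.
have -> : \sum_(x | P x) \sum_(y | P y) h x y =
   \sum_x \sum_y (if P x then (if P y then h x y else 0) else 0).
  rewrite big_mkcond /=; apply: eq_bigr => x _; case: (P x).
    by rewrite big_mkcond.
  by rewrite big1.
have fi : injective (fun x : T => val (enum_rank x)).
  by move=> x y e; apply: enum_rank_inj; apply: val_inj.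
rewrite (@split_sum _ _ fi) [X in _ + X]big1 ?addr0.
  by rewrite [RHS]big_mkcond /=; apply: eq_bigr => x _; case: (P x).
move=> x _; apply: big1 => y _.
rewrite hs; case: (P x); case: (P y) => //; by rewrite c2.
Qed.

Lemma sq_sum (R : comPzRingType) (c2 : forall x : R, x + x = 0) (T : finType) (P : pred T) (g : T -> T -> R) :
  \sum_(x | P x) \sum_(y | P y) g x y * g y x = (\sum_(x | P x) g x x) ^+ 2.
Proof.
rewrite (@sym_sum _ c2 _ P (fun x y => g x y * g y x)); last by move=> x y; rewrite mulrC.
rewrite expr2 big_distrl /=.
rewrite [RHS](eq_bigr (fun x => \sum_(y | P y) g x x * g y y)); last first.
  by move=> x _; rewrite big_distrr.
by rewrite (@sym_sum _ c2 _ P (fun x y => g x x * g y y)) // => x y; rewrite mulrC.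
Qed.

Lemma F2opp (x : 'F_2) : - x = x.
Proof. by apply/eqP; rewrite eq_sym -subr_eq0 opprK F2add. Qed.
Lemma F2cases (x : 'F_2) : x = 0 \/ x = 1.
Proof. by case: x => [[|[|//]] ?]; [left|right]; apply/val_inj. Qed.
Lemma F2nat (m : nat) : (m%:R : 'F_2) = (odd m)%:R.
Proof. by rewrite -Fp_nat_mod // modn2. Qed.

Section Gen.
Variable R : comPzRingType.
Variable n : nat.

Definition M2 (A : 'M[R]_n) (x y : 'I_n * 'I_n) : R :=
  A x.1 y.1 * A x.2 y.2 - A x.1 y.2 * A x.2 y.1.

Definition E2 (A : 'M[R]_n) := \sum_(x : 'I_n * 'I_n | (x.1 < x.2)%N) M2 A x x.

Lemma dsum (u v : 'I_n -> R) :
  \sum_p \sum_q u p * v q = (\sum_p u p) * (\sum_q v q).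
Proof.
rewrite big_distrl /=; apply: eq_bigr => p _; by rewrite big_distrr.
Qed.

Lemma CB (A B : 'M[R]_n) x z :
  M2 (A *m B) x z = \sum_(y : 'I_n * 'I_n | (y.1 < y.2)%N) M2 A x y * M2 B y z.
Proof.
case: x => i j; case: z => k l.
have E : M2 (A *m B) (i, j) (k, l) =
  \sum_p \sum_q (M2 A (i,j) (p,q) * (B p k * B q l)).
  rewrite /M2 /= !mxE.
  have -> : \sum_p \sum_q ((A i p * A j q - A i q * A j p) * (B p k * B q l)) =
     \sum_p \sum_q (A i p * B p k) * (A j q * B q l) -
     \sum_p \sum_q (A j p * B p k) * (A i q * B q l).
    rewrite -sumrB; apply: eq_bigr => p _; rewrite -sumrB; apply: eq_bigr => q _.
    rewrite mulrBl mulrACA; congr (_ - _).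
    by rewrite [A i q * _]mulrC mulrACA.
  rewrite !dsum; congr (_ - _); by rewrite mulrC.
rewrite E (@split_sum _ _ val_inj) big1 ?add0r; last first.
  by move=> p _; rewrite /M2 /= subrr mul0r.
rewrite pair_big_dep /=; apply: eq_bigr => [[p q]] /= _.
rewrite /M2 /=.
have -> : A i q * A j p - A i p * A j q = - (A i p * A j q - A i q * A j p) by rewrite opprB.
rewrite mulNr -mulrN -mulrDr; congr (_ * _).
by rewrite [B q k * _]mulrC.
Qed.

Lemma sum_bool_cardR (T : finType) (b : pred T) :
  \sum_x ((b x)%:R : R) = (#|[set x | b x]|)%:R.
Proof.
rewrite -sum1_card natr_sum [RHS]big_mkcond /=; apply: eq_bigr => x _.
by rewrite inE; case: (b x).
Qed.

Lemma E2_expand (opp2 : forall x : R, - x = x) (A : 'M[R]_n) (P : 'M[bool]_n)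
  (hA : forall i j, A i j = (P i j)%:R) :
  E2 A = (#|[set x : 'I_n * 'I_n | (x.1 < x.2)%N && P x.1 x.1 && P x.2 x.2]| +
          #|[set x : 'I_n * 'I_n | (x.1 < x.2)%N && P x.1 x.2 && P x.2 x.1]|)%:R.
Proof.
have -> : E2 A = \sum_(x : 'I_n * 'I_n)
      ((((x.1 < x.2)%N && P x.1 x.1 && P x.2 x.2) : bool)%:R
       + (((x.1 < x.2)%N && P x.1 x.2 && P x.2 x.1) : bool)%:R).
  rewrite /E2 big_mkcond /=; apply: eq_bigr => x _.
  case: (x.1 < x.2)%N; last by rewrite /= addr0.
  by rewrite /M2 !hA opp2 -!natrM !mulnb.
by rewrite big_split /= !sum_bool_cardR natrD.
Qed.
End Gen.

Lemma sum_bool_card (T : finType) (b : pred T) :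
  \sum_x ((b x)%:R : 'F_2) = (#|[set x | b x]|)%:R.
Proof.
rewrite -sum1_card natr_sum [RHS]big_mkcond /=; apply: eq_bigr => x _.
by rewrite inE; case: (b x).
Qed.

Lemma pow2 n (f : 'M['F_2]_n -> 'F_2) (hf : forall B, f (B * B) = f B ^+ 2) m A :
  f (A ^+ (2 ^ m)) = f A ^+ (2 ^ m).
Proof.
elim: m => [|m IH]; first by rewrite !expr1.
rewrite expnS mulnC !exprM -IH [in LHS]expr2 hf //.
Qed.

Lemma E2_sq n (A : 'M['F_2]_n) : E2 (A * A) = E2 A ^+ 2.
Proof.
rewrite /E2 -mulmxE.
under eq_bigr => x _ do rewrite CB.
exact: (@sq_sum _ F2add _ (fun x : 'I_n * 'I_n => (x.1 < x.2)%N) (M2 A)).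
Qed.

Lemma tr_sq n (A : 'M['F_2]_n) : \tr (A * A) = \tr A ^+ 2.
Proof.
rewrite /mxtrace -mulmxE.
under eq_bigr => i _ do rewrite mxE.
exact: (@sq_sum _ F2add _ xpredT (fun i j => A i j)).
Qed.

Lemma nil2 n (A : 'M['F_2]_n) k : A ^+ k = 0 -> A ^+ (2 ^ k) = 0.
Proof.
move=> hk; rewrite -(subnKC (ltnW (ltn_expl k (isT : 1 < 2)%N))) exprD hk mul0r //.
Qed.

Lemma c1_card n (P : 'M[bool]_n) : #|[set i | P i i]| = 2 ->
  #|[set x : 'I_n * 'I_n | (x.1 < x.2)%N && P x.1 x.1 && P x.2 x.2]| = 1.
Proof.
move/eqP/cards2P => [a [b [nab eA]]].
have L i : P i i = (i == a) || (i == b) by rewrite -in_set2 -eA inE.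
wlog hab : a b nab eA L / (a < b)%N.
  move=> W; case: (ltngtP a b) => h; first exact: (W a b).
    apply: (W b a) => //; first by rewrite eq_sym.
      by rewrite setUC.
    by move=> i; rewrite L orbC.
  by case/eqP: nab; apply: val_inj.
apply/eqP/cards1P; exists (a, b); apply/setP => [[i j]]; rewrite !inE /= !L xpair_eqE.
case: (i =P a) => [->|nia]; case: (j =P b) => [->|njb] //=.
- by rewrite hab orbT.
- rewrite orbF andbT; case: (j =P a) => [->|_] //=; first by rewrite andbT ssrnat.ltnn.
  by rewrite andbF.
- case: (i =P b) => [->|] //=; last by rewrite andbF.
  by rewrite orbT !andbT ssrnat.ltnn.
- rewrite orbF; case: (i =P b) => [->|] //=; case: (j =P a) => [->|] //=.
  by rewrite andbT ssrnat.ltnNge ssrnat.ltnW.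
  all: by move=> *; rewrite ?andbF.
Qed.

Theorem lemma5p2 (n : nat) (P : znz_pattern n) :
  irreducible_pattern P ->
  (odd (num_loops P) -> ~ potentially_nilpotent 'F_2 P) /\
  (num_loops P = 2%N -> num_2cycles P = 2%N -> ~ potentially_nilpotent 'F_2 P).
Proof.
move=> _.
have real (A : 'M['F_2]_n) : realization P A -> forall i j, A i j = (P i j)%:R.
  move=> hr i j; have := hr i j; case: (F2cases (A i j)) => ->.
    by rewrite eqxx => <-.
  by rewrite oner_neq0 => <-.
split.
  move=> hodd [A [hr [k hk]]]; have hA := real A hr.
  have t1 : \tr A = 1.
    rewrite /mxtrace; under eq_bigr => i _ do rewrite hA.
    by rewrite (@sum_bool_card _ (fun i => P i i)) F2nat hodd.
  have := pow2 (@tr_sq n) k A; rewrite nil2 // mxtrace0 t1 expr1n => /eqP.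
  by rewrite eq_sym oner_eq0.
move=> hl hc [A [hr [k hk]]]; have hA := real A hr.
have e1 : E2 A = 1.
  apply: (etrans (E2_expand F2opp hA)).
  rewrite -/(num_2cycles P) hc c1_card //.
  by apply/val_inj.
have := pow2 (@E2_sq n) k A; rewrite nil2 // e1 expr1n.
have -> : E2 (0 : 'M['F_2]_n) = 0.
  by apply: big1 => x _; rewrite /M2 !mxE mul0r subrr.
by move/eqP; rewrite eq_sym oner_eq0.
Qed.
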